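(* For any fuzzifying topological space $(X,\tau)$ and $A\subseteq X$, $T_2^P(X,\tau)\le T_2^P(A,\tau/A)$, i.e. $\vDash T_2^P(X,\tau)\to T_2^P(A,\tau/A)$.
   Context: A fuzzifying topology on $X$ is $\tau:P(X)\to[0,1]$ with $\tau(X)=1$, $\tau(A\cap B)\ge\min(\tau(A),\tau(B))$, $\tau(\bigcup A_\lambda)\ge\inf\tau(A_\lambda)$. $N_x(A)=\sup_{x\in B\subseteq A}\tau(B)$; $Cl(A)(x)=1-N_x(X\setminus A)$; for $\mu:X\to[0,1]$, $Int(\mu)(x)=\sup_{x\in B}\min(\tau(B),\inf_{y\in B}\mu(y))$; pre-open degrees $\tau_P(A)=\inf_{x\in A}Int(Cl(A))(x)$; $N^P_x(A)=\sup_{x\in B\subseteq A}\tau_P(B)$. $T_2^P(X,\tau)=\inf_{x,y\in X,x\ne y}\sup\{\min(N^P_x(U),N^P_y(V)):U,V\subseteq X,U\cap V=\emptyset\}$. For the subspace: $(\tau_P/A)(B)=\sup\{\tau_P(V):V\cap A=B\}$ for $B\subseteq A$, $N^{P^A}_x(U)=\sup_{x\in C\subseteq U}(\tau_P/A)(C)$, and $T_2^P(A,\tau/A)=\inf_{x,y\in A,x\ne y}\sup\{\min(N^{P^A}_x(U),N^{P^A}_y(V)):U,V\subseteq A,U\cap V=\emptyset\}$. *)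

(* Defs.v *)
From HB Require Import structures.
From mathcomp Require Import all_boot all_order all_algebra.
From mathcomp Require Import all_classical all_reals.
Set Implicit Arguments. Unset Strict Implicit. Unset Printing Implicit Defensive.
Import Order.TTheory GRing.Theory Num.Theory.
Local Open Scope classical_set_scope.
Local Open Scope ring_scope.

Section Fuzzy.
Variable R : realType.

(* Sup / inf in the complete lattice [0,1]: sup of the empty set is 0,
   inf of the empty set is 1 (all sets used below are subsets of [0,1]). *)
Definition fsup (E : set R) : R := sup (E `|` [set 0]).
Definition finf (E : set R) : R := inf (E `|` [set 1]).

Variable X : Type.

Definition fuzzifying_topology (tau : set X -> R) : Prop :=
  (forall A, 0 <= tau A <= 1) /\
  tau setT = 1 /\
  (forall A B, Num.min (tau A) (tau B) <= tau (A `&` B)) /\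
  (forall F : set (set X),
      finf [set tau A | A in F] <= tau (\bigcup_(A in F) A)).

Variable tau : set X -> R.

Definition nbhd (x : X) (A : set X) : R :=
  fsup [set tau B | B in [set B | B x /\ B `<=` A]].

Definition fcl (A : set X) (x : X) : R := 1 - nbhd x (~` A).

Definition fint (mu : X -> R) (x : X) : R :=
  fsup [set Num.min (tau B) (finf (mu @` B)) | B in [set B | B x]].

Definition preopen (A : set X) : R :=
  finf [set fint (fcl A) x | x in A].

Definition pnbhd (x : X) (A : set X) : R :=
  fsup [set preopen B | B in [set B | B x /\ B `<=` A]].

Definition T2P : R :=
  finf [set fsup [set Num.min (pnbhd xy.1 UV.1) (pnbhd xy.2 UV.2)
                  | UV in [set UV : set X * set X | UV.1 `&` UV.2 = set0]]
       | xy in [set xy : X * X | xy.1 <> xy.2]].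

Definition preopen_sub (A B : set X) : R :=
  fsup [set preopen V | V in [set V | V `&` A = B]].

Definition pnbhd_sub (A : set X) (x : X) (U : set X) : R :=
  fsup [set preopen_sub A C | C in [set C | C x /\ C `<=` U]].

Definition T2P_sub (A : set X) : R :=
  finf [set fsup [set Num.min (pnbhd_sub A xy.1 UV.1) (pnbhd_sub A xy.2 UV.2)
                  | UV in [set UV : set X * set X |
                           [/\ UV.1 `<=` A, UV.2 `<=` A & UV.1 `&` UV.2 = set0]]]
       | xy in [set xy : X * X | [/\ A xy.1, A xy.2 & xy.1 <> xy.2]]].

End Fuzzy.

(* Main.v *)
Require Import Defs.
From HB Require Import structures.
From mathcomp Require Import all_boot all_order all_algebra.
From mathcomp Require Import all_classical all_reals.
Import Order.TTheory GRing.Theory Num.Theory.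
Local Open Scope classical_set_scope.
Local Open Scope ring_scope.

Section Aux.
Variable R : realType.
Implicit Types E : set R.

Lemma fsup_ge0 E : 0 <= fsup E.
Proof.
rewrite /fsup; case: (pselect (has_ubound (E `|` [set 0]))) => h.
  by apply: (ub_le_sup h); right.
by rewrite sup_out // => -[_ ?].
Qed.

Lemma fsup_ub E e : (forall x, E x -> x <= 1) -> E e -> e <= fsup E.
Proof.
move=> hE Ee; apply: ub_le_sup; last by left.
exists 1 => x [/hE //|->]; exact: ler01.
Qed.

Lemma fsup_le E b : (forall x, E x -> x <= b) -> 0 <= b -> fsup E <= b.
Proof.
move=> hE b0; apply: ge_sup; first by exists 0; right.
by move=> x [/hE //|->].
Qed.

Lemma finf_le1 E : finf E <= 1.
Proof.
rewrite /finf; case: (pselect (has_lbound (E `|` [set 1]))) => h.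
  by apply: (ge_inf h); right.
by rewrite inf_out // => -[_ ?].
Qed.

Lemma finf_lb E e : (forall x, E x -> 0 <= x) -> E e -> finf E <= e.
Proof.
move=> hE Ee; apply: ge_inf; last by left.
exists 0 => x [/hE //|->]; exact: ler01.
Qed.

Lemma finf_ge E b : (forall x, E x -> b <= x) -> b <= 1 -> b <= finf E.
Proof.
move=> hE b1; apply: lb_le_inf; first by exists 1; right.
by move=> x [/hE //|->].
Qed.
End Aux.

Theorem lemma3p3 (R : realType) (X : Type) (tau : set X -> R)
  (htau : fuzzifying_topology tau) (A : set X) :
  T2P tau <= T2P_sub tau A.
Proof.
have pre1 : forall B, preopen tau B <= 1 by move=> B; exact: finf_le1.
have ps1 : forall C, preopen_sub tau A C <= 1.
  by move=> C; apply: fsup_le => // _ [V _ <-].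
have pns1 : forall x U, pnbhd_sub tau A x U <= 1.
  by move=> x U; apply: fsup_le => // _ [C _ <-].
have key : forall x U, A x -> pnbhd tau x U <= pnbhd_sub tau A x (U `&` A).
  move=> x U Ax; apply: fsup_le; last exact: fsup_ge0.
  move=> _ [B [Bx BU] <-].
  apply: (le_trans (y := preopen_sub tau A (B `&` A))).
    by apply: fsup_ub; [move=> _ [V _ <-]|exists B].
  apply: fsup_ub; first by move=> _ [C _ <-].
  exists (B `&` A) => //; split; first by split.
  by move=> z [Bz Az]; split => //; apply: BU.
apply: finf_ge; last exact: finf_le1.
move=> _ [[x y] [Ax Ay xy] <-] /=.
apply: (le_trans (y := fsup [set Num.min (pnbhd tau (x, y).1 UV.1)
            (pnbhd tau (x, y).2 UV.2)
          | UV in [set UV : set X * set X | UV.1 `&` UV.2 = set0]])).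
  by apply: finf_lb; [move=> _ [? _ <-]; exact: fsup_ge0|exists (x, y)].
apply: fsup_le; last exact: fsup_ge0.
move=> _ [[U V] /= UV <-] /=.
apply: (le_trans (y := Num.min (pnbhd_sub tau A x (U `&` A))
                               (pnbhd_sub tau A y (V `&` A)))).
  by rewrite le_min !ge_min key // key // orbT.
apply: fsup_ub.
  by move=> _ [? _ <-]; rewrite ge_min pns1.
exists (U `&` A, V `&` A) => //=; split; try by move=> z [].
by rewrite setIACA UV set0I.
Qed.
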